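(* Let $G$ be a graph, and let $u$ and $v$ be non-adjacent vertices of $G$ with $d_G(u)\geq 1$. Then $$C_u(G+uv)-C_u(G)\leq \frac{2}{d_G(u)+1},$$ with equality if and only if $N_G(u)\subseteq N_G(v)$ and $N_G(u)$ is an independent set in $G$.
   Context: All graphs are finite and simple; $G+uv$ denotes the graph obtained from $G$ by adding the edge $uv$. For a vertex $w$ of a graph $G$, $N_G(w)$ is its neighborhood, $d_G(w)$ its degree, and $m(G[N_G(w)])$ the number of edges of the subgraph induced by $N_G(w)$. The clustering coefficient of $w$ in $G$ is $C_w(G)=m(G[N_G(w)])/\binom{d_G(w)}{2}$ if $d_G(w)\geq 2$, and $C_w(G)=0$ otherwise. *)

(* Defs.v *)
From HB Require Import structures.
From mathcomp Require Import all_boot all_order all_algebra.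
Set Implicit Arguments. Unset Strict Implicit. Unset Printing Implicit Defensive.
Import Order.TTheory GRing.Theory Num.Theory.

Definition simple_graph (T : finType) (e : rel T) : Prop :=
  symmetric e /\ irreflexive e.

Definition add_edge (T : finType) (e : rel T) (u v : T) : rel T :=
  fun x y => [|| e x y, (x == u) && (y == v) | (x == v) && (y == u)].

Definition nbhd (T : finType) (e : rel T) (w : T) : {set T} := [set x | e w x].

Definition deg (T : finType) (e : rel T) (w : T) : nat := #|nbhd e w|.

Definition induced_edges (T : finType) (e : rel T) (S : {set T}) : nat :=
  #|[set E : {set T} | (E \subset S) &&
       [exists x, exists y, e x y && (E == [set x; y])]]|.

Definition clustering (T : finType) (e : rel T) (w : T) : rat :=
  if (2 <= deg e w)%N
  then ((induced_edges e (nbhd e w))%:R / ('C(deg e w, 2))%:R)%R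
  else 0%R.

Definition independent (T : finType) (e : rel T) (S : {set T}) : Prop :=
  forall x y, x \in S -> y \in S -> ~~ e x y.

(* Main.v *)
Require Import Defs.
From mathcomp Require Import zify.
From HB Require Import structures.
From mathcomp Require Import all_boot all_order all_algebra.
Import Order.TTheory GRing.Theory Num.Theory.

Lemma nbhd_add (T : finType) (e : rel T) u v : u != v ->
  nbhd (add_edge e u v) u = v |: nbhd e u.
Proof.
move=> huv; apply/setP=> x; rewrite !inE /add_edge eqxx /= (negbTE huv) /=.
by rewrite orbF orbC.
Qed.

Lemma set2_inj (T : finType) (v : T) : injective (fun x => [set v; x]).
Proof.
move=> x y /= H.
have : x \in [set v; y] by rewrite -H !inE eqxx orbT.
rewrite !inE => /orP [/eqP xv | /eqP //].
have : y \in [set v; x] by rewrite H !inE eqxx orbT.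
by rewrite !inE xv orbb => /eqP.
Qed.

Lemma ie_add (T : finType) (e : rel T) u v : simple_graph e -> u != v -> ~~ e u v ->
 induced_edges (add_edge e u v) (v |: nbhd e u) =
   (induced_edges e (nbhd e u) + #|nbhd e u :&: nbhd e v|)%N.
Proof.
move=> [sym irr] huv nuv.
have vN : v \notin nbhd e u by rewrite inE.
have uN : u \notin v |: nbhd e u by rewrite !inE (negbTE huv) irr.
rewrite /induced_edges.
rewrite -(card_imset (nbhd e u :&: nbhd e v) (@set2_inj T v)).
set A := [set E : {set T} | _ && [exists x, exists y, e x y && _]].
set B := imset _ _.
have -> : [set E : {set T} | (E \subset v |: nbhd e u) &&
       [exists x, exists y, add_edge e u v x y && (E == [set x; y])]] = A :|: B.
  apply/setP => E; rewrite !inE; apply/idP/idP.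
  - case/andP => sub /existsP [x /existsP [y /andP [exy /eqP EE]]].
    subst E.
    have xin : x \in v |: nbhd e u by apply: (subsetP sub); rewrite !inE eqxx.
    have yin : y \in v |: nbhd e u by apply: (subsetP sub); rewrite !inE eqxx orbT.
    move: exy; rewrite /add_edge; case/or3P.
    + move=> exy; case: (eqVneq x v) => [xv | xv].
      * subst x. apply/orP; right; apply/imsetP; exists y => //.
        have yv : y != v by apply: contraTneq exy => ->; rewrite irr.
        move: yin; rewrite in_setU1 (negbTE yv) /= => yN.
        by rewrite inE yN inE exy.
      * case: (eqVneq y v) => [yv | yv].
        - subst y. apply/orP; right; apply/imsetP; exists x; last by rewrite setUC.
          move: xin; rewrite in_setU1 (negbTE xv) /= => xN.
          by rewrite inE xN inE sym exy.
        - move: xin yin; rewrite !in_setU1 (negbTE xv) (negbTE yv) /= => xN yN.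
          apply/orP; left; apply/andP; split.
            move: (xN) (yN); rewrite !inE => xN' yN'.
            by apply/subsetP => z; rewrite !inE => /orP [/eqP-> | /eqP->].
          by apply/existsP; exists x; apply/existsP; exists y; rewrite exy eqxx.
    + by case/andP => /eqP xu _; rewrite xu in xin; rewrite xin in uN.
    + by case/andP => _ /eqP yu; rewrite yu in yin; rewrite yin in uN.
  - case/orP.
    + case/andP => sub /existsP [x /existsP [y /andP [exy eqE]]].
      apply/andP; split; first by apply: subset_trans sub _; apply: subsetUr.
      by apply/existsP; exists x; apply/existsP; exists y; rewrite /add_edge exy eqE.
    + case/imsetP => x; rewrite inE => /andP [xN xv] ->.
      apply/andP; split.
        apply/subsetP => z; rewrite !inE => /orP [-> // | /eqP->].
        by move: xN; rewrite inE => ->; rewrite orbT.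
      apply/existsP; exists v; apply/existsP; exists x.
      by move: xv; rewrite /add_edge inE => ->; rewrite /= eqxx.
have AB : A :&: B = set0.
  apply/setP => E; rewrite !inE; apply/negP => /andP [/andP [sub _] /imsetP [x _ EE]].
  subst E; move: (subsetP sub v); rewrite !inE eqxx => /(_ isT) H.
  by rewrite H in nuv.
by rewrite cardsU AB cards0 subn0.
Qed.

Lemma ie0 (T : finType) (e : rel T) (S : {set T}) :
  induced_edges e S = 0%N <-> independent e S.
Proof.
rewrite /induced_edges; split.
- move=> /cards0_eq H x y xS yS; apply/negP => exy.
  have : [set x; y] \in (set0 : {set {set T}}).
    rewrite -H inE; apply/andP; split.
      by apply/subsetP => z; rewrite !inE => /orP [/eqP-> | /eqP->].
    by apply/existsP; exists x; apply/existsP; exists y; rewrite exy eqxx.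
  by rewrite inE.
- move=> ind; apply/eqP; rewrite cards_eq0; apply/eqP/setP => E; rewrite !inE.
  apply/negP => /andP [sub /existsP [x /existsP [y /andP [exy /eqP EE]]]].
  subst E.
  have xS : x \in S by apply: (subsetP sub); rewrite !inE eqxx.
  have yS : y \in S by apply: (subsetP sub); rewrite !inE eqxx orbT.
  by move: (ind x y xS yS); rewrite exy.
Qed.

Lemma bin2_mul n : ('C(n, 2) * 2 = n * n.-1)%N.
Proof.
elim: n => [|n IH] //.
rewrite binS bin1 mulnDl IH /=; case: n {IH} => //= n; lia.
Qed.
From mathcomp Require Import ring lra.
Import Order.TTheory GRing.Theory Num.Theory.


Local Open Scope ring_scope.

Lemma alg (D x y c c' : rat) : 2 <= D -> 0 <= x -> 0 <= y -> y <= D ->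
  c' * 2 = (D+1)*D -> c * 2 = D*(D-1) ->
  (x+y)/c' - x/c <= 2/(D+1) /\ ((x+y)/c' - x/c = 2/(D+1) <-> y = D /\ x = 0).
Proof.
move=> D2 x0 y0 yD hc' hc.
have c'E : c' = (D+1)*D/2 by rewrite -hc'; field.
have cE : c = D*(D-1)/2 by rewrite -hc; field.
have Dn0 : D != 0 by apply/eqP => H; rewrite H in D2; lra.
have D1n0 : D + 1 != 0 by apply/eqP => H; lra.
have Dm1n0 : D - 1 != 0 by apply/eqP => H; lra.
have id : 2/(D+1) - ((x+y)/c' - x/c) = ((D-y)*(D-1) + 2*x) * 2/(D*(D+1)*(D-1)).
  by rewrite c'E cE; field; rewrite Dn0 D1n0 Dm1n0.
have Q0 : 0 < D*(D+1)*(D-1) by rewrite !mulr_gt0 //; lra.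
have P1 : 0 <= (D-y)*(D-1) by rewrite mulr_ge0 //; lra.
split.
  rewrite -subr_ge0 id; apply: divr_ge0; last exact: ltW.
  by apply: mulr_ge0 => //; lra.
split.
- move/eqP; rewrite eq_sym -subr_eq0 id mulf_eq0 invr_eq0 (negbTE (lt0r_neq0 Q0)) orbF.
  rewrite mulf_eq0 (_ : (2:rat) == 0 = false) ?orbF //.
  move/eqP => H.
  have xz : x = 0 by lra.
  have : (D-y)*(D-1) = 0 by lra.
  move/eqP; rewrite mulf_eq0 (negbTE Dm1n0) orbF => /eqP H2.
  split => //; lra.
- case => yE xE; subst y x.
  apply/eqP; rewrite eq_sym -subr_eq0 id; apply/eqP.
  by rewrite subrr mul0r mulr0 addr0 !mul0r.
Qed.
Local Open Scope ring_scope.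

Theorem mainTheorem5 (T : finType) (e : rel T) (u v : T) :
  simple_graph e -> u != v -> ~~ e u v -> (1 <= deg e u)%N ->
  clustering (add_edge e u v) u - clustering e u <= 2 / (deg e u + 1)%:R
  /\ (clustering (add_edge e u v) u - clustering e u = 2 / (deg e u + 1)%:R
      <-> (nbhd e u \subset nbhd e v) /\ independent e (nbhd e u)).
Proof.
move=> sg huv nuv d1; have [sym irr] := sg.
have vN : v \notin nbhd e u by rewrite inE.
have degE : deg (add_edge e u v) u = (deg e u).+1.
  by rewrite /deg nbhd_add // cardsU1 vN.
rewrite /clustering degE nbhd_add // ie_add //.
rewrite -/(deg e u).
have ekd : (#|nbhd e u :&: nbhd e v| == deg e u) = (nbhd e u \subset nbhd e v).
  rewrite /deg; have [_ ->] := subset_leqif_cards (subsetIl (nbhd e u) (nbhd e v)).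
  by apply/eqP/idP => [<-|/setIidPl //]; exact: subsetIr.
have kd : (#|nbhd e u :&: nbhd e v| <= deg e u)%N by apply: subset_leq_card; exact: subsetIl.
have em := @ie0 T e (nbhd e u).
move: ekd kd em.
set d := deg e u; set m := induced_edges e (nbhd e u); set k := #|_ :&: _|.
move=> ekd kd em.
have [d1' | d2] : (d = 1 \/ 2 <= d)%N by lia.
- have ind : independent e (nbhd e u).
    move: d1'; rewrite /d /deg => /eqP /cards1P [z zE] x y.
    by rewrite zE !inE => /eqP -> /eqP ->; rewrite irr.
  have m0 : m = 0%N by apply/em.
  rewrite d1' m0 /= binn add0n divr1 subr0.
  rewrite d1' in ekd kd.
  have -> : (2 : rat) / (1 + 1)%:R = 1 by rewrite divff.
  rewrite lern1 kd; split => //.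
  split; first by move/eqP; rewrite pnatr_eq1 => H; rewrite -ekd H.
  by case => H _; rewrite -ekd in H; rewrite (eqP H).
- rewrite d2 (leq_trans d2 (leqnSn d)).
  have H1 : ('C(d.+1,2)%:R * 2 : rat) = (d%:R + 1) * d%:R.
    by rewrite -natrM bin2_mul natrM natr1.
  have H2 : ('C(d,2)%:R * 2 : rat) = d%:R * (d%:R - 1).
    by rewrite -natrM bin2_mul natrM -subn1 natrB // ltnW.
  have := @alg d%:R m%:R k%:R _ _ _ _ _ _ H1 H2.
  rewrite natrD (_ : d%:R + 1 = (d+1)%:R) ?natrD // => -[] //.
  + by rewrite ler_nat.
  + by rewrite ler_nat.
  move=> -> ->; split => //.
  rewrite -ekd; split.
    by case=> /eqP; rewrite eqr_nat => -> /eqP; rewrite pnatr_eq0 => /eqP /em.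
  by case=> /eqP ->; move/em => ->.
Qed.
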